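(* Elements of $\mathcal{L}_s$ are compared as follows: for all finite $E, F \subseteq \mathcal{X}$, variables $x, y$ and $S, K \in \mathbb{N}$ such that the sublevels involved belong to $\mathcal{L}_s$, (1) $A(E, x, S) \not\leqslant_{\mathcal{L}} B(F, K)$; (2) $B(E, S) \leqslant_{\mathcal{L}} B(F, K) \iff F \subseteq E \land S \leqslant K$; (3) $B(E, S) \leqslant_{\mathcal{L}} A(F, x, K) \iff F \subseteq E \land S \leqslant K + 1$; (4) $A(E, x, S) \leqslant_{\mathcal{L}} A(F, y, K) \iff F \subseteq E \land x = y \land S \leqslant K$.
   Context: $\mathcal{X}$ is a countable set of variables; a valuation is $\sigma\colon\mathcal{X}\to\mathbb{N}$. For finite $E\subseteq\mathcal{X}$, $x\in\mathcal{X}$, $S\in\mathbb{N}$, the sublevels $A(E,x,S)$ and $B(E,S)$ have values $[A(E,x,S)]_\sigma = 0$ if some $y\in E$ has $\sigma(y)=0$, and $\sigma(x)+S$ otherwise; $[B(E,S)]_\sigma=0$ if some $y\in E$ has $\sigma(y)=0$, and $S$ otherwise. $\mathcal{L}_s$ is the set of sublevels $A(E,x,S)$ with $x \in E$ and $B(E,S)$ with $S>0$. For such expressions, $t_1 \leqslant_{\mathcal{L}} t_2$ means $[t_1]_\sigma \le [t_2]_\sigma$ for every valuation $\sigma$. *)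

(* Defs.v *)
From HB Require Import structures.
From mathcomp Require Import all_boot.
From mathcomp Require Import finmap.
Set Implicit Arguments. Unset Strict Implicit. Unset Printing Implicit Defensive.


Inductive sublevel (X : countType) : Type :=
| SA : {fset X} -> X -> nat -> sublevel X
| SB : {fset X} -> nat -> sublevel X.

Definition sl_val (X : countType) (sigma : X -> nat) (t : sublevel X) : nat :=
  match t with
  | SA E x s => if [exists y : E, sigma (val y) == 0] then 0 else sigma x + s
  | SB E s => if [exists y : E, sigma (val y) == 0] then 0 else s
  end.

Definition in_Ls (X : countType) (t : sublevel X) : Prop :=
  match t with
  | SA E x _ => x \in E
  | SB _ s => 0 < s
  end.

Definition leL (X : countType) (t1 t2 : sublevel X) : Prop :=
  forall sigma : X -> nat, sl_val sigma t1 <= sl_val sigma t2.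

(* Main.v *)
Require Import Defs.
From HB Require Import structures.
From mathcomp Require Import all_boot.
From mathcomp Require Import finmap.
From mathcomp Require Import zify.
Local Open Scope fset_scope.
Set Implicit Arguments. Unset Strict Implicit.

Definition zE (X : countType) (s : X -> nat) (E : {fset X}) :=
  [exists y : E, s (val y) == 0].
Lemma slA (X : countType) (s : X -> nat) (E : {fset X}) (x : X) (S : nat) : @sl_val X s (SA E x S) = if zE s E then 0 else (s x + S)%N.
Proof. by []. Qed.
Lemma slB (X : countType) (s : X -> nat) (E : {fset X}) (S : nat) : @sl_val X s (SB E S) = if zE s E then 0 else S.
Proof. by []. Qed.

Lemma ex_false (X : countType) (sigma : X -> nat) (E : {fset X}) :
  (forall y, y \in E -> sigma y != 0) -> zE sigma E = false.
Proof.
move=> h; apply/negbTE/existsPn => y; apply: h; exact: valP.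
Qed.

Lemma ex_true (X : countType) (sigma : X -> nat) (E : {fset X}) y :
  y \in E -> sigma y = 0 -> zE sigma E = true.
Proof.
move=> yE h; apply/existsP; exists [` yE] => /=; exact/eqP.
Qed.

Lemma ex_cases (X : countType) (sigma : X -> nat) (E : {fset X}) :
  zE sigma E = false -> forall y, y \in E -> sigma y != 0.
Proof.
move=> h y yE; apply/negP => /eqP h0; by rewrite (ex_true yE h0) in h.
Qed.

Theorem theorem29 (X : countType) (E F : {fset X}) (x y : X) (S K : nat) :
  (in_Ls (SA E x S) -> in_Ls (SB F K) -> ~ leL (SA E x S) (SB F K)) /\
  (in_Ls (SB E S) -> in_Ls (SB F K) ->
     (leL (SB E S) (SB F K) <-> (F `<=` E /\ S <= K))) /\
  (in_Ls (SB E S) -> in_Ls (SA F x K) ->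
     (leL (SB E S) (SA F x K) <-> (F `<=` E /\ S <= K + 1))) /\
  (in_Ls (SA E x S) -> in_Ls (SA F y K) ->
     (leL (SA E x S) (SA F y K) <-> (F `<=` E /\ x = y /\ S <= K))).
Proof.
rewrite /leL.
have subE : forall (G H : {fset X}) (P : (X -> nat) -> Prop),
   (forall f, f \in G -> f \notin H ->
      P (fun z => if z == f then 0 else 1) -> False) ->
   (forall s, P s) -> G `<=` H.
  move=> G H P hf hP; apply/fsubsetP => f fG; apply/negPn/negP => fH.
  exact: (hf f fG fH (hP _)).
have one : forall G : {fset X}, zE (fun _ : X => 1) G = false.
  by move=> G; apply: ex_false.
have zf : forall (G H : {fset X}) f, f \in G -> f \notin H ->
   zE (fun z => if z == f then 0 else 1) G = true /\
   zE (fun z => if z == f then 0 else 1) H = false.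
  move=> G H f fG fH; split; first by apply: (ex_true fG); rewrite eqxx.
  by apply: ex_false => z zH; case: (z =P f) => // e; rewrite -e zH in fH.
split; [|split; [|split]].
- rewrite /in_Ls => xE K0 h; have := h (fun _ => K.+1).
  by rewrite slA slB !ex_false // addSn ltnNge leq_addr.
- rewrite /in_Ls => S0 K0; split.
  + move=> h; split; last by have := h (fun _ => 1); rewrite !slB !one.
    apply: (subE F E (fun s => sl_val s (SB E S) <= sl_val s (SB F K))) => // f fF fE.
    rewrite !slB; case: (zf F E f fF fE) => -> ->.
    by rewrite leqn0 => /eqP S00; rewrite S00 in S0.
  + case=> /fsubsetP FE SK s; rewrite !slB; case: ifP => // /ex_cases hE.
    by rewrite ex_false // => z /FE; apply: hE.
- rewrite /in_Ls => S0 xF; split.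
  + move=> h; split; last by have := h (fun _ => 1); rewrite slA slB !one add1n addn1.
    apply: (subE F E (fun s => sl_val s (SB E S) <= sl_val s (SA F x K))) => // f fF fE.
    rewrite slA slB; case: (zf F E f fF fE) => -> ->.
    by rewrite leqn0 => /eqP S00; rewrite S00 in S0.
  + case=> /fsubsetP FE SK s; rewrite slA slB; case: ifP => // /ex_cases hE.
    rewrite ex_false; last by move=> z /FE; apply: hE.
    apply: (leq_trans SK); have := hE x (FE x xF); rewrite -lt0n; lia.
- rewrite /in_Ls => xE yF; split.
  + move=> h; split.
      apply: (subE F E (fun s => sl_val s (SA E x S) <= sl_val s (SA F y K))) => // f fF fE.
      rewrite !slA; case: (zf F E f fF fE) => -> ->; case: (x =P f) => [e|_] //; by rewrite -e xE in fE.
    split; last by have := h (fun _ => 1); rewrite !slA !one leq_add2l.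
    apply/eqP/negP => /negP nxy.
    have := h (fun z => if z == x then K.+2 else 1).
    rewrite !slA !ex_false; try by move=> z _; case: ifP.
    rewrite eqxx eq_sym (negbTE nxy); lia.
  + case=> /fsubsetP FE [exy SK] s; subst y; rewrite !slA; case: ifP => // /ex_cases hE.
    rewrite ex_false; last by move=> z /FE; apply: hE.
    by rewrite leq_add2l.
Qed.
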